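(* Let $\ell$ be a log-scale on a set $X$, and let $(x_n)$ and $(y_n)$ be Cauchy sequences with respect to $\ell$ that are not equivalent. Then there exists a constant $\Delta>0$ such that any two partial limits of the sequence $\ell(x_n,y_n)$ differ from each other by at most $\Delta$.
   Context: A log-scale on a set $X$ is a function $\ell:X\times X\to\mathbb{R}\cup\{\infty\}$ such that $\ell(x,y)=\ell(y,x)$, $\ell(x,y)=+\infty$ iff $x=y$, and for some $\delta\ge0$, $\ell(x,z)\ge\min(\ell(x,y),\ell(y,z))-\delta$ for all $x,y,z$. A sequence $(x_n)$ is Cauchy (with respect to $\ell$) if $\ell(x_n,x_m)\to\infty$ as $n,m\to\infty$. Two Cauchy sequences $(x_n),(y_n)$ are equivalent if $\ell(x_n,y_n)\to\infty$. *)

(* Defs.v *)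
From HB Require Import structures.
From mathcomp Require Import all_boot all_order all_algebra.
From mathcomp Require Import all_classical all_reals all_analysis.
Set Implicit Arguments. Unset Strict Implicit. Unset Printing Implicit Defensive.
Import Order.TTheory GRing.Theory Num.Theory.
Local Open Scope ring_scope.
Local Open Scope classical_set_scope.
Local Open Scope ereal_scope.

Definition log_scale (R : realType) (X : Type) (l : X -> X -> \bar R) : Prop :=
  [/\ (forall x y, l x y != -oo),
      (forall x y, l x y = l y x),
      (forall x y, l x y = +oo <-> x = y) &
      exists delta : R, (0 <= delta)%R /\
        forall x y z, Order.min (l x y) (l y z) - delta%:E <= l x z].

Definition ls_cauchy (R : realType) (X : Type) (l : X -> X -> \bar R)
    (x : nat -> X) : Prop :=
  forall M : R, exists N : nat, forall n m : nat,
    (N <= n)%N -> (N <= m)%N -> M%:E <= l (x n) (x m).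

Definition ls_equiv (R : realType) (X : Type) (l : X -> X -> \bar R)
    (x y : nat -> X) : Prop :=
  forall M : R, exists N : nat, forall n : nat, (N <= n)%N -> M%:E <= l (x n) (y n).

Definition partial_limit (R : realType) (u : nat -> \bar R) (L : \bar R) : Prop :=
  exists phi : nat -> nat, {homo phi : n m / (n < m)%N} /\
    (fun n => u (phi n)) @ \oo --> L.

(* Main.v *)
Require Import Defs.
From HB Require Import structures.
From mathcomp Require Import all_boot all_order all_algebra.
From mathcomp Require Import all_classical all_reals all_analysis.
From mathcomp Require Import lra.
Import Order.TTheory GRing.Theory Num.Theory.
Local Open Scope ring_scope.
Local Open Scope ereal_scope.

Lemma homo_ge (phi : nat -> nat) : {homo phi : n m / (n < m)%N} -> forall k, (k <= phi k)%N.
Proof.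
move=> h; elim=> // k IH; have := h k k.+1 (ltnSn k)=> H; apply: leq_trans H; by [] || rewrite ltnS.
Qed.

Lemma tri3 (R : realType) (X : Type) (l : X -> X -> \bar R) (d : R) :
  (forall x y z, Order.min (l x y) (l y z) - d%:E <= l x z) -> (0 <= d)%R ->
  forall (c : R) a b e f, c%:E <= l a b -> c%:E <= l b e -> c%:E <= l e f ->
  (c - d - d)%:E <= l a f.
Proof.
move=> H d0 c a b e f h1 h2 h3.
have h4 : (c - d)%:E <= l b f.
  apply: le_trans (H b e f); rewrite EFinB leeB //.
  by rewrite le_min h2 h3.
apply: le_trans (H a b f); rewrite EFinB leeB //.
rewrite le_min h4 andbT; apply: le_trans h1; rewrite lee_fin; lra.
Qed.

Theorem proposition1p1p9 (R : realType) (X : Type) (l : X -> X -> \bar R)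
    (x y : nat -> X) :
  log_scale l -> ls_cauchy l x -> ls_cauchy l y -> ~ ls_equiv l x y ->
  exists Delta : R, (0 < Delta)%R /\
    forall L1 L2 : \bar R,
      partial_limit (fun n => l (x n) (y n)) L1 ->
      partial_limit (fun n => l (x n) (y n)) L2 ->
      L1 <= L2 + Delta%:E /\ L2 <= L1 + Delta%:E.
Proof.
case=> nNy lsym _ [d [d0 Htri]] cx cy neq.
have T3 := @tri3 _ _ l d Htri d0.
set u := fun n => l (x n) (y n).
have [M HM] : exists M : R, forall N, exists n, (N <= n)%N /\ u n < M%:E.
  apply: contrapT => hn; apply: neq => M.
  have [N HN] : exists N, ~ exists n, (N <= n)%N /\ u n < M%:E.
    by apply: contrapT => h; apply: hn; exists M => N; apply: contrapT => h2; apply: h; exists N.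
  exists N => n hn'; rewrite leNgt; apply/negP => h; apply: HN; by exists n.
have [N1 HN1] := cx (M + d + d)%R.
have [N2 HN2] := cy (M + d + d)%R.
set N := maxn N1 N2.
have hx n m : (N <= n)%N -> (N <= m)%N -> (M + d + d)%:E <= l (x n) (x m).
  by move=> a b; apply: HN1; [exact: leq_trans (leq_maxl N1 N2) a | exact: leq_trans (leq_maxl N1 N2) b].
have hy n m : (N <= n)%N -> (N <= m)%N -> (M + d + d)%:E <= l (y n) (y m).
  by move=> a b; apply: HN2; [exact: leq_trans (leq_maxr N1 N2) a | exact: leq_trans (leq_maxr N1 N2) b].
have ub m : (N <= m)%N -> u m <= (M + d + d)%:E.
  move=> hm; rewrite leNgt; apply/negP => hlt.
  have [n [hn hun]] := HM N.
  have := T3 (M + d + d)%R (x n) (x m) (y m) (y n) (hx _ _ hn hm) (ltW hlt).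
  rewrite lsym hy // => /(_ isT); rewrite (_ : (M + d + d - d - d = M)%R); last by lra.
  by rewrite leNgt hun.
have key n m : (N <= n)%N -> (N <= m)%N -> u n - (d + d)%:E <= u m.
  move=> hn hm.
  have : u n != -oo by apply: nNy.
  have := ub n hn.
  case E : (u n) => [r| |] //= hr _.
  have hr' := hr.
  have := T3 r (x m) (x n) (y n) (y m) (le_trans hr' (hx _ _ hm hn)).
  have E' : l (x n) (y n) = r%:E := E.
  rewrite E' lexx => /(_ isT (le_trans hr' (hy _ _ hn hm))).
  by rewrite -EFinD opprD addrA.
have main L1 L2 : partial_limit u L1 -> partial_limit u L2 -> L1 <= L2 + (d + d)%:E.
  move=> [phi [hphi cphi]] [psi [hpsi cpsi]].
  apply: (cvge_to_le cphi); exists N => // k /= hk.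
  rewrite -leeBlDr //.
  apply: (cvge_to_ge cpsi); exists N => // j /= hj.
  apply: key; [exact: (leq_trans hk (@homo_ge _ hphi k)) | exact: (leq_trans hj (@homo_ge _ hpsi j))].
exists (d + d + 1)%R; split; first lra.
have w a b : a <= b + (d + d)%:E -> a <= b + (d + d + 1)%:E.
  move=> h; apply: le_trans h _; rewrite leeD2l // lee_fin; lra.
by move=> L1 L2 h1 h2; split; apply: w; apply: main.
Qed.
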